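(* Let $n\ge 2$ and $I=\{0,1,\ldots,n-1\}$. Let $\tilde S_n$ be the affine permutation group with generators $\tilde s_0,\ldots,\tilde s_{n-1}$, and for $i\in I$ let $K_{\{i\}}=\langle\tilde s_j: j\in I,\ j\ne i\rangle$. Then: (1) for every $J\subseteq I$ with $|J|>1$, $(\tilde S_n,(K_{\{i\}})_{i\in J})$ is a subgroup geometry system; (2) for each $i\in I$, $K_{\{i\}}$ is isomorphic to the symmetric group $S_n$ on $\mathbb{Z}/n\mathbb{Z}$, via the map on generators $\tilde s_j\mapsto (j\ \ j+1 \bmod n)$ (the transposition of the residues $j$ and $j+1 \bmod n$); (3) for all $J,L\subseteq I$, $\langle\tilde s_i:i\in J\rangle\cap\langle\tilde s_i:i\in L\rangle=\langle\tilde s_i:i\in J\cap L\rangle$.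
   Context: $\tilde S_n$ is the group (under composition) of all bijections $u:\mathbb{Z}\to\mathbb{Z}$ with $u(j+n)=u(j)+n$ for all $j\in\mathbb{Z}$ and $\sum_{i=1}^n u(i)=\binom{n+1}{2}$; such $u$ is written $[u(1),\ldots,u(n)]$. The generators are $\tilde s_i=[1,\ldots,i-1,i+1,i,i+2,\ldots,n]$ for $1\le i\le n-1$ and $\tilde s_0=[0,2,\ldots,n-1,n+1]$. For a group $G$, a finite index set $J$ and subgroups $(K_{\{i\}})_{i\in J}$, put $K_\tau=\bigcap_{i\in\tau}K_{\{i\}}$ for $\emptyset\ne\tau\subseteq J$ and $K_\emptyset=G$. $(G,(K_{\{i\}})_{i\in J})$ is a subgroup geometry system if: (A1) for all $\tau,\tau'\subseteq J$, $K_{\tau\cap\tau'}=\langle K_\tau,K_{\tau'}\rangle$; (A2) for every $\tau\subsetneq J$ and $i\in J\setminus\tau$, $K_\tau K_{\{i\}}=\bigcap_{j\in\tau}K_{\{j\}}K_{\{i\}}$; (A3) for every $i\in J$, $K_J\ne K_{J\setminus\{i\}}$. *)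

(* Defs.v *)
From Stdlib Require Import ZArith.
From mathcomp Require Import all_boot all_fingroup.

Unset Strict Implicit.
Unset Printing Implicit Defensive.

Definition zset := (Z -> Z) -> Prop.

Definition zcomp (u v : Z -> Z) : Z -> Z := fun x => u (v x).
Definition idz : Z -> Z := fun x => x.

Fixpoint zsum (u : Z -> Z) (k : nat) : Z :=
  match k with
  | O => 0%Z
  | S k' => (zsum u k' + u (Z.of_nat (S k')))%Z
  end.

Definition Saff (n : nat) : zset := fun u =>
  bijective u /\
  (forall j : Z, u (j + Z.of_nat n)%Z = (u j + Z.of_nat n)%Z) /\
  zsum u n = Z.of_nat 'C(n.+1, 2).

(* The affine permutation with window [w(1),...,w(n)] (w given as a list
   w_0..w_{n-1}), extended by u(j+n) = u(j)+n. *)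
Definition of_window (n : nat) (w : seq Z) : Z -> Z := fun j =>
  (nth 0%Z w (Z.to_nat ((j - 1) mod Z.of_nat n)) +
   Z.of_nat n * ((j - 1) / Z.of_nat n))%Z.

(* Windows of the generators:
   s~_i = [1,...,i-1,i+1,i,i+2,...,n] (1 <= i <= n-1),
   s~_0 = [0,2,...,n-1,n+1]. Entry k (0-based) is u(k+1). *)
Definition sgen_window (n i : nat) : seq Z :=
  map (fun k => if i == 0 then
                  (if k == 0 then 0%Z
                   else if k == n.-1 then Z.of_nat n.+1 else Z.of_nat k.+1)
                else Z.of_nat (if k.+1 == i then i.+1
                               else if k.+1 == i.+1 then i else k.+1))
      (iota 0 n).

Definition sgen (n i : nat) : Z -> Z := of_window n (sgen_window n i).

Definition subgroup (n : nat) (H : zset) : Prop :=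
  (forall u, H u -> Saff n u) /\
  H idz /\
  (forall u v, H u -> H v -> H (zcomp u v)) /\
  (forall u, H u -> exists v, H v /\ zcomp u v = idz /\ zcomp v u = idz).

Definition gen (n : nat) (S : zset) : zset := fun u =>
  forall H, subgroup n H -> (forall s, S s -> H s) -> H u.

Definition set_eq (A B : zset) : Prop := forall u, A u <-> B u.

Definition gens (n : nat) (J : {set 'I_n}) : zset :=
  gen n (fun u => exists j : 'I_n, j \in J /\ u = sgen n j).

Definition Kpt (n : nat) (i : 'I_n) : zset := gens n [set~ i].

Definition prodset (A B : zset) : zset := fun u =>
  exists a b, A a /\ B b /\ u = zcomp a b.

Definition Ktau (n : nat) (K : 'I_n -> zset) (tau : {set 'I_n}) : zset :=
  fun u => if tau == set0 then Saff n u else forall i, i \in tau -> K i u.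

(* Subgroup geometry system (S~_n, (K i)_{i in J}). In (A2), the
   intersection over tau is taken inside G (so that it is G for tau empty). *)
Definition subgroup_geometry_system (n : nat) (K : 'I_n -> zset)
    (J : {set 'I_n}) : Prop :=
  (forall tau tau' : {set 'I_n}, tau \subset J -> tau' \subset J ->
     set_eq (Ktau n K (tau :&: tau'))
            (gen n (fun u => Ktau n K tau u \/ Ktau n K tau' u))) /\
  (forall (tau : {set 'I_n}) (i : 'I_n), tau \proper J -> i \in J ->
     i \notin tau ->
     set_eq (prodset (Ktau n K tau) (K i))
            (fun u => Saff n u /\
                      forall j, j \in tau -> prodset (K j) (K i) u)) /\
  (forall i, i \in J -> ~ set_eq (Ktau n K J) (Ktau n K (J :\ i))).

(* Main.v *)
Require Import Defs.
From Stdlib Require Import ZArith Lia FunctionalExtensionality Classical.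
From mathcomp Require Import all_boot all_fingroup.

Set Implicit Arguments.
Unset Strict Implicit.
Unset Printing Implicit Defensive.

Open Scope Z_scope.

Definition periodic (n : nat) (u : Z -> Z) :=
  forall j, u (j + Z.of_nat n) = u j + Z.of_nat n.

Lemma periodic_nat n u : periodic n u ->
  forall (m : nat) j, u (j + Z.of_nat n * Z.of_nat m) = u j + Z.of_nat n * Z.of_nat m.
Proof.
move=> hp; elim=> [|m IH] j.
  by rewrite Z.mul_0_r !Z.add_0_r.
have -> : j + Z.of_nat n * Z.of_nat m.+1 = (j + Z.of_nat n * Z.of_nat m) + Z.of_nat n by lia.
rewrite hp IH; lia.
Qed.

Lemma periodic_mul n u : periodic n u ->
  forall (t : Z) j, u (j + Z.of_nat n * t) = u j + Z.of_nat n * t.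
Proof.
move=> hp t j.
have [m [-> | ->]] : exists m : nat, t = Z.of_nat m \/ t = - Z.of_nat m.
  exists (Z.to_nat (Z.abs t)); lia.
  exact: periodic_nat.
have := periodic_nat hp m (j + Z.of_nat n * - Z.of_nat m).
have -> : j + Z.of_nat n * - Z.of_nat m + Z.of_nat n * Z.of_nat m = j by lia.
lia.
Qed.

Lemma modr (N a q : Z) : 0 <= a < N -> (a + N * q) mod N = a.
Proof.
move=> h. rewrite Z.mul_comm Z_mod_plus_full. by apply Z.mod_small.
Qed.

Lemma mod_dec (N y : Z) : 0 < N -> y = y mod N + N * (y / N) /\ 0 <= y mod N < N.
Proof. move=> h; split; [ rewrite Z.add_comm; apply Z.div_mod; lia | apply Z.mod_pos_bound; lia]. Qed.

Lemma zsumS f k : zsum f k.+1 = zsum f k + f (Z.of_nat k.+1).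
Proof. by []. Qed.

Lemma zsum_ext f g k : (forall y, 1 <= y <= Z.of_nat k -> f y = g y) -> zsum f k = zsum g k.
Proof.
elim: k => [|k IH] h //.
rewrite !zsumS IH; last by move=> y hy; apply h; lia.
rewrite h //; lia.
Qed.

Lemma zsum_upd f g k p : 1 <= p <= Z.of_nat k ->
  (forall y, 1 <= y <= Z.of_nat k -> y <> p -> f y = g y) ->
  zsum f k = zsum g k + (f p - g p).
Proof.
elim: k => [|k IH] hp h; first (simpl in hp; lia).
rewrite !zsumS.
case: (Z.eq_dec p (Z.of_nat k.+1)) => [e|ne].
  rewrite -e (zsum_ext (f:=f) (g:=g)); first lia.
  move=> y hy; apply h; lia.
rewrite IH; [ | lia | move=> y hy hne; apply h; lia ].
rewrite (h (Z.of_nat k.+1)); lia.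
Qed.

Lemma zsum_addc f c k : zsum (fun x => f x + c) k = zsum f k + c * Z.of_nat k.
Proof. elim: k => [|k IH]; first (simpl; lia). rewrite !zsumS IH; lia. Qed.

Lemma zsum_nonneg f k : (forall y, 0 <= f y) -> 0 <= zsum f k.
Proof. move=> h; elim: k => [|k IH]; first (simpl; lia). rewrite zsumS. have := h (Z.of_nat k.+1); lia. Qed.

Lemma zsum_id n : zsum idz n = Z.of_nat 'C(n.+1, 2).
Proof.
elim: n => [|n IH] //.
rewrite zsumS IH /idz.
rewrite [in RHS]binS bin1.
rewrite -plusE Nat2Z.inj_add; lia.
Qed.

Definition sg (N j y : Z) : Z :=
  if y mod N =? j then y + 1 else if y mod N =? (j + 1) mod N then y - 1 else y.

Lemma sgenE (n j : nat) : (2 <= n)%N -> (j < n)%N -> sgen n j = sg (Z.of_nat n) (Z.of_nat j).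
Proof.
move=> /leP hn /ltP hj; apply functional_extensionality => y.
rewrite /sgen /of_window /sgen_window.
set N := Z.of_nat n.
have hN : 2 <= N by rewrite /N; lia.
have [hy hr] := mod_dec (y - 1) (ltac:(lia) : 0 < N).
set r := (y - 1) mod N in hy hr *; set q := (y - 1) / N in hy *.
have hrn : (Z.to_nat r < n)%N by apply/ltP; lia.
rewrite (nth_map 0%N); last by rewrite size_iota.
rewrite nth_iota // add0n.
have ey : y = (r + 1) + N * q by lia.
have ymod : y mod N = if r + 1 =? N then 0 else r + 1.
  rewrite ey; case: Z.eqb_spec => e.
    rewrite e Z.mul_comm Z_mod_plus_full Z_mod_same_full //.
  apply modr; lia.
have jmod : (Z.of_nat j + 1) mod N = if Z.of_nat j + 1 =? N then 0 else Z.of_nat j + 1.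
  case: Z.eqb_spec => e; first by rewrite e Z_mod_same_full.
  apply Z.mod_small; lia.
rewrite /sg ymod jmod.
have Er : Z.of_nat (Z.to_nat r) = r by lia.
rewrite /N in hN hr ey *.
case: (Z.eqb_spec (r+1) (Z.of_nat n)) => ?; case: (Z.eqb_spec (Z.of_nat j+1) (Z.of_nat n)) => ?; repeat (case: eqP => ?); repeat (case: Z.eqb_spec => ?); try lia.
Qed.


Lemma mod_bound N y : 0 < N -> 0 <= y mod N < N.
Proof. move=> h; apply Z.mod_pos_bound; lia. Qed.

Lemma mod_add1 N y : 0 < N ->
  ((y + 1) mod N = y mod N + 1 /\ y mod N + 1 < N) \/ (y mod N = N - 1 /\ (y + 1) mod N = 0).
Proof.
move=> hN; have [e b] := mod_dec y hN.
have -> : y + 1 = (y mod N + 1) + N * (y / N) by lia.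
case: (Z.eq_dec (y mod N + 1) N) => h.
  right; split; first lia.
  rewrite h Z.mul_comm Z_mod_plus_full Z_mod_same_full //.
left; rewrite modr; lia.
Qed.

Lemma mod_sub1 N y : 0 < N ->
  ((y - 1) mod N = y mod N - 1 /\ 0 < y mod N) \/ (y mod N = 0 /\ (y - 1) mod N = N - 1).
Proof.
move=> hN; have [e b] := mod_dec y hN.
have -> : y - 1 = (y mod N - 1) + N * (y / N) by lia.
case: (Z.eq_dec (y mod N) 0) => h.
  right; split; first lia.
  rewrite h. have -> : 0 - 1 + N * (y / N) = (N - 1) + N * (y / N - 1) by lia.
  rewrite modr; lia.
left; rewrite modr; lia.
Qed.

Lemma mod_addN N y t : 0 < N -> (y + N * t) mod N = y mod N.
Proof. move=> h; rewrite Z.mul_comm Z_mod_plus_full //. Qed.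

Lemma mod_addN1 N y : 0 < N -> (y + N) mod N = y mod N.
Proof. move=> h; have := mod_addN y 1 h; rewrite Z.mul_1_r //. Qed.

Lemma jp_cases N j : 0 <= j < N -> ((j + 1) mod N = j + 1 /\ j + 1 < N) \/ (j = N - 1 /\ (j + 1) mod N = 0).
Proof.
move=> h; case: (Z.eq_dec (j + 1) N) => e.
  right; split; first lia; rewrite e Z_mod_same_full //.
left; rewrite Z.mod_small; lia.
Qed.

Lemma sg_cases N j y :
  (y mod N = j /\ sg N j y = y + 1) \/
  (y mod N <> j /\ y mod N = (j + 1) mod N /\ sg N j y = y - 1) \/
  (y mod N <> j /\ y mod N <> (j + 1) mod N /\ sg N j y = y).
Proof.
rewrite /sg; case: Z.eqb_spec => h1; first by left.
case: Z.eqb_spec => h2; first by right; left.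
by right; right.
Qed.

Lemma sg_per N j y : 0 < N -> sg N j (y + N) = sg N j y + N.
Proof. move=> h; rewrite /sg mod_addN1 //; case: ifP => _; [lia|case: ifP => _; lia]. Qed.

Lemma sg_invol N j y : 2 <= N -> 0 <= j < N -> sg N j (sg N j y) = y.
Proof.
move=> hN hj.
have hN0 : 0 < N by lia.
have := jp_cases hj.
case: (sg_cases N j y) => [[h1 ->]|[[h1 [h2 ->]]|[h1 [h2 ->]]]] hjp.
- case: (sg_cases N j (y + 1)) => [[h3 ->]|[[h3 [h4 ->]]|[h3 [h4 ->]]]]; try lia;
  case: (mod_add1 y hN0); lia.
- case: (sg_cases N j (y - 1)) => [[h3 ->]|[[h3 [h4 ->]]|[h3 [h4 ->]]]]; try lia;
  case: (mod_sub1 y hN0); lia.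
- case: (sg_cases N j y) => [[h3 ->]|[[h3 [h4 ->]]|[h3 [h4 ->]]]]; lia.
Qed.

Lemma sg_bij N j : 2 <= N -> 0 <= j < N -> bijective (sg N j).
Proof. move=> h1 h2; exists (sg N j) => y; exact: sg_invol. Qed.

Lemma sg_periodic n j : (0 < n)%N -> periodic n (sg (Z.of_nat n) j).
Proof. move=> /ltP h y; apply sg_per; lia. Qed.

Definition Sphi (phi : Z -> Z) (n : nat) (u : Z -> Z) := zsum (fun y => phi (u y - y)) n.

Lemma zsum_upd2 f g k p q : 1 <= p <= Z.of_nat k -> 1 <= q <= Z.of_nat k -> p <> q ->
  (forall y, 1 <= y <= Z.of_nat k -> y <> p -> y <> q -> f y = g y) ->
  zsum f k = zsum g k + (f p - g p) + (f q - g q).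
Proof.
move=> hp hq hpq h.
set h' := fun y => if y =? p then f p else g y.
rewrite (@zsum_upd f h' k q) //; last first.
  move=> y hy hyq; rewrite /h'; case: Z.eqb_spec => e; [by rewrite e | by apply h].
rewrite (@zsum_upd h' g k p) //; last first.
  move=> y hy hyp; rewrite /h'; case: Z.eqb_spec => e //.
rewrite /h' Z.eqb_refl. case: Z.eqb_spec => e; first lia. lia.
Qed.

Definition rep (N j : Z) := if j =? 0 then N else j.

Lemma rep_spec N j : 2 <= N -> 0 <= j < N -> 1 <= rep N j <= N /\ rep N j mod N = j.
Proof.
move=> h1 h2; rewrite /rep; case: Z.eqb_spec => e.
  split; first lia. rewrite e Z_mod_same_full //.
split; first lia. rewrite Z.mod_small //.
Qed.

Lemma Sphi_sg phi n u j : (2 <= n)%N -> 0 <= j < Z.of_nat n -> periodic n u ->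
  let x := rep (Z.of_nat n) j in
  Sphi phi n (zcomp u (sg (Z.of_nat n) j)) =
  Sphi phi n u - phi (u x - x) - phi (u (x + 1) - (x + 1))
   + phi (u (x + 1) - x) + phi (u x - (x + 1)).
Proof.
move=> /leP hn hj hp x.
remember (Z.of_nat n) as N eqn:EN.
have hN : 2 <= N by lia.
have hN0 : 0 < N by lia.
rewrite /Sphi /zcomp; cbv beta.
have [hx1 hx2] := rep_spec hN hj.
rewrite -/x in hx1 hx2.
case: (Z.eq_dec j 0) => [j0|jn0].
- have ex : x = N by rewrite /x /rep j0.
  rewrite (@zsum_upd2 (fun y => phi (u (sg N j y) - y)) (fun y => phi (u y - y)) n 1 N); try lia; last first.
    move=> y hy h1 h2; congr phi.
    case: (sg_cases N j y) => [[h3 ->]|[[h3 [h4 ->]]|[h3 [h4 ->]]]] //.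
    + exfalso; rewrite Z.mod_small in h3; lia.
    + exfalso; move: h4; rewrite Z.mod_small; last lia. rewrite j0 Z.mod_small; lia.
  have s1 : sg N j 1 = 0.
    case: (sg_cases N j 1) => [[h3 ->]|[[h3 [h4 ->]]|[h3 [h4 ->]]]] //.
    + rewrite Z.mod_small in h3; lia.
    + move: h4 h3; rewrite j0 !(Z.mod_small 1); lia.
  have sN : sg N j N = N + 1.
    case: (sg_cases N j N) => [[h3 ->]|[[h3 [h4 ->]]|[h3 [h4 ->]]]] //.
    + rewrite Z_mod_same_full in h3; lia.
    + rewrite Z_mod_same_full in h3; lia.
  rewrite s1 sN ex.
  have e0 : u 0 = u N - N by have := hp 0; rewrite Z.add_0_l -EN; lia.
  have e1 : u (N + 1) = u 1 + N by have := hp 1; rewrite -EN (Z.add_comm 1 N); lia.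
  rewrite e0 e1.
  have -> : u N - N - 1 = u N - (N + 1) by lia.
  have -> : u 1 + N - (N + 1) = u 1 - 1 by lia.
  lia.
- have ex : x = j by rewrite /x /rep; case: Z.eqb_spec.
  have hjN : j + 1 <= N by lia.
  rewrite (@zsum_upd2 (fun y => phi (u (sg N j y) - y)) (fun y => phi (u y - y)) n j (j + 1)); try lia; last first.
    move=> y hy h1 h2; congr phi.
    case: (sg_cases N j y) => [[h3 ->]|[[h3 [h4 ->]]|[h3 [h4 ->]]]] //.
    + exfalso. case: (Z.eq_dec y N) => e.
        rewrite e Z_mod_same_full in h3; lia.
      rewrite Z.mod_small in h3; lia.
    + exfalso. case: (jp_cases hj) => [[e1 e2]|[e2 e1]]; rewrite e1 in h4;
      (case: (Z.eq_dec y N) => e; [rewrite e Z_mod_same_full in h4 | rewrite Z.mod_small in h4]); lia.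
  have s1 : sg N j j = j + 1.
    case: (sg_cases N j j) => [[h3 ->]|[[h3 [h4 ->]]|[h3 [h4 ->]]]] //;
    rewrite Z.mod_small in h3; lia.
  have s2 : sg N j (j + 1) = j.
    case: (sg_cases N j (j + 1)) => [[h3 ->]|[[h3 [h4 ->]]|[h3 [h4 ->]]]]; try lia.
    + case: (mod_add1 j hN0); rewrite (Z.mod_small j); lia.
  rewrite s1 s2 ex. lia.
Qed.

Lemma zsum_sub f g k : zsum (fun y => f y - g y) k = zsum f k - zsum g k.
Proof. elim: k => [|k IH]; first (simpl; lia). rewrite !zsumS IH; lia. Qed.

Lemma zsum_Sphi n u : zsum u n = Sphi id n u + Z.of_nat 'C(n.+1, 2).
Proof. have h := zsum_sub u idz n. rewrite zsum_id /idz in h. cbv beta in h. rewrite /Sphi /id. lia. Qed.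

Lemma Saff_sg n u j : (2 <= n)%N -> 0 <= j < Z.of_nat n -> Saff n u -> Saff n (zcomp u (sg (Z.of_nat n) j)).
Proof.
move=> hn hj [hb [hp hs]].
have hn' : (2 <= Z.of_nat n) by move/leP: hn; lia.
split; [|split].
- apply: bij_comp => //; exact: sg_bij.
- move=> y; rewrite /zcomp sg_per ?hp //; lia.
- rewrite zsum_Sphi (Sphi_sg id hn hj hp); cbv beta; have := zsum_Sphi n u; rewrite hs; lia.
Qed.

Definition Dpot n u := Sphi (fun z => z * z) n u.

Lemma Dpot_nonneg n u : 0 <= Dpot n u.
Proof. rewrite /Dpot /Sphi; apply zsum_nonneg => y; apply Z.square_nonneg. Qed.

Lemma Dpot_sg n u j : (2 <= n)%N -> 0 <= j < Z.of_nat n -> periodic n u ->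
  let x := rep (Z.of_nat n) j in
  Dpot n (zcomp u (sg (Z.of_nat n) j)) = Dpot n u - 2 * (u x - u (x + 1)).
Proof.
move=> hn hj hp x; rewrite /Dpot (Sphi_sg _ hn hj hp) -/x. ring.
Qed.


Definition inJ n (J : {set 'I_n}) (k : Z) :=
  exists j : 'I_n, j \in J /\ Z.of_nat j = k mod Z.of_nat n.
Definition cutfree n (J : {set 'I_n}) x y :=
  forall k, (x <= k < y \/ y <= k < x) -> inJ J k.
Definition bpres n (J : {set 'I_n}) (u : Z -> Z) := forall x, cutfree J x (u x).
Definition Blk n (J : {set 'I_n}) u := Saff n u /\ bpres J u.
Definition Pre n (J : {set 'I_n}) u := bijective u /\ periodic n u /\ bpres J u.

Inductive Wd n (J : {set 'I_n}) : (Z -> Z) -> Prop :=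
 | Wd0 : Wd J idz
 | WdS u (j : 'I_n) : Wd J u -> j \in J -> Wd J (zcomp u (sgen n j)).

Lemma ord_of n : (0 < n)%N -> forall k, exists j : 'I_n, Z.of_nat j = k mod Z.of_nat n.
Proof.
move=> /ltP hn k.
have hb := @mod_bound (Z.of_nat n) k ltac:(lia).
have h : (Z.to_nat (k mod Z.of_nat n) < n)%N by apply/ltP; lia.
exists (Ordinal h) => /=; lia.
Qed.

Lemma inJ_shift n (J : {set 'I_n}) k t : (0 < n)%N -> (inJ J (k + Z.of_nat n * t) <-> inJ J k).
Proof. move=> /ltP hn; rewrite /inJ mod_addN //; lia. Qed.

Lemma cutfree_refl n (J : {set 'I_n}) x : cutfree J x x.
Proof. move=> k; lia. Qed.

Lemma cutfree_sym n (J : {set 'I_n}) x y : cutfree J x y -> cutfree J y x.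
Proof. move=> h k hk; apply h; lia. Qed.

Lemma cutfree_trans n (J : {set 'I_n}) x y z : cutfree J x y -> cutfree J y z -> cutfree J x z.
Proof.
move=> h1 h2 k hk.
case: (Z.lt_ge_cases k y) => hky; case: (Z.lt_ge_cases k x) => hkx.
all: first [apply h1; lia | apply h2; lia].
Qed.

Lemma inJ_mono n (J L : {set 'I_n}) k : J \subset L -> inJ J k -> inJ L k.
Proof. move=> /subsetP s [j [hj e]]; exists j; split => //; exact: s. Qed.

Lemma cutfree_mono n (J L : {set 'I_n}) x y : J \subset L -> cutfree J x y -> cutfree L x y.
Proof. move=> s h k hk; exact: inJ_mono s (h k hk). Qed.

Lemma cutfree_sg n (J : {set 'I_n}) (j : 'I_n) y : (2 <= n)%N -> j \in J ->
  cutfree J y (sg (Z.of_nat n) (Z.of_nat j) y).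
Proof.
move=> /leP hn hj.
have hN0 : 0 < Z.of_nat n by lia.
have hjn := ltn_ord j; move/ltP: hjn => hjn.
case: (sg_cases (Z.of_nat n) (Z.of_nat j) y) => [[h1 ->]|[[h1 [h2 ->]]|[h1 [h2 ->]]]].
- move=> k hk; have -> : k = y by lia. by exists j.
- move=> k hk; have -> : k = y - 1 by lia. exists j; split => //.
  case: (mod_sub1 y hN0); case: (@jp_cases (Z.of_nat n) (Z.of_nat j)); lia.
- exact: cutfree_refl.
Qed.

Lemma Saff_idz n : Saff n idz.
Proof.
split; [|split].
- by exists idz.
- by move=> j.
- exact: zsum_id.
Qed.

Lemma bpres_sg n (J : {set 'I_n}) u (j : 'I_n) : (2 <= n)%N -> j \in J -> bpres J u ->
  bpres J (zcomp u (sgen n j)).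
Proof.
move=> hn hj hu x; rewrite (sgenE hn (ltn_ord j)) /zcomp.
apply: cutfree_trans; [apply: cutfree_sg hn hj | apply: hu].
Qed.

Lemma Blk_sg n (J : {set 'I_n}) u (j : 'I_n) : (2 <= n)%N -> j \in J -> Blk J u ->
  Blk J (zcomp u (sgen n j)).
Proof.
move=> hn hj [hs hb]; split; last exact: bpres_sg.
rewrite (sgenE hn (ltn_ord j)); apply Saff_sg => //.
have := ltn_ord j; move/ltP; lia.
Qed.

Lemma Pre_sg n (J : {set 'I_n}) u (j : 'I_n) : (2 <= n)%N -> j \in J -> Pre J u ->
  Pre J (zcomp u (sgen n j)).
Proof.
move=> hn hj [hb [hp hc]]; split; [|split]; last exact: bpres_sg.
- rewrite (sgenE hn (ltn_ord j)); apply: bij_comp => //; apply sg_bij;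
  have := ltn_ord j; move/ltP; move/leP: hn; lia.
- rewrite (sgenE hn (ltn_ord j)) => y; rewrite /zcomp sg_per ?hp //; move/leP: hn; lia.
Qed.

Lemma Blk_idz n (J : {set 'I_n}) : Blk J idz.
Proof. split; [exact: Saff_idz | move=> x; exact: cutfree_refl]. Qed.

Lemma Wd_Blk n (J : {set 'I_n}) u : (2 <= n)%N -> Wd J u -> Blk J u.
Proof.
move=> hn; elim=> [|v j _ IH hj]; first exact: Blk_idz.
exact: Blk_sg.
Qed.

Lemma nat_min (P : nat -> Prop) : (exists m, P m) -> exists m, P m /\ forall k, (k < m)%coq_nat -> ~ P k.
Proof.
move=> [m hm].
apply NNPP => hno.
have : forall m, ~ P m.
  move=> m'; induction m' as [m' IH] using (well_founded_ind lt_wf).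
  move=> hp; apply hno; exists m'; split => // k hk; exact: IH.
by move/(_ m).
Qed.

Lemma chain u a b : (forall k, a <= k < b -> u k < u (k + 1)) -> a <= b -> u a + (b - a) <= u b.
Proof.
move=> h hab.
have [m em] : exists m : nat, b = a + Z.of_nat m by exists (Z.to_nat (b - a)); lia.
subst b.
elim: m h {hab} => [|m IH] h; first by rewrite /= Z.add_0_r; lia.
have := IH (fun k (hk : a <= k < a + Z.of_nat m) => h k ltac:(lia)).
have := h (a + Z.of_nat m) ltac:(lia).
have -> : a + Z.of_nat m + 1 = a + Z.of_nat m.+1 by lia.
lia.
Qed.

Lemma noDescent_id n (J : {set 'I_n}) u : (2 <= n)%N -> Pre J u ->
  (Saff n u \/ exists k, ~ inJ J k) ->
  (forall x, inJ J x -> u x < u (x + 1)) -> u = idz.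
Proof.
move=> hn [hb [hp hc]] hcase hinc.
have hN : 2 <= Z.of_nat n by move/leP: hn; lia.
have hn0 : (0 < n)%N by apply: leq_trans hn.
case: (classic (exists k, ~ inJ J k)) => [[k0 hk0] | hall].
- apply functional_extensionality => y; rewrite /idz.
  have [d [hd hdmin]] : exists d : nat, ~ inJ J (y - 1 - Z.of_nat d) /\
       forall d', (d' < d)%coq_nat -> ~ ~ inJ J (y - 1 - Z.of_nat d').
    apply nat_min.
    exists (Z.to_nat ((y - 1 - k0) mod Z.of_nat n)).
    have [e b] := mod_dec (y - 1 - k0) (ltac:(lia) : 0 < Z.of_nat n).
    have -> : y - 1 - Z.of_nat (Z.to_nat ((y - 1 - k0) mod Z.of_nat n)) =
              k0 + Z.of_nat n * ((y - 1 - k0) / Z.of_nat n) by lia.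
    by rewrite inJ_shift.
  have [e [he hemin]] : exists e : nat, ~ inJ J (y + Z.of_nat e) /\
       forall e', (e' < e)%coq_nat -> ~ ~ inJ J (y + Z.of_nat e').
    apply nat_min.
    exists (Z.to_nat ((k0 - y) mod Z.of_nat n)).
    have [e b] := mod_dec (k0 - y) (ltac:(lia) : 0 < Z.of_nat n).
    have -> : y + Z.of_nat (Z.to_nat ((k0 - y) mod Z.of_nat n)) =
              k0 + Z.of_nat n * (- ((k0 - y) / Z.of_nat n)) by lia.
    by rewrite inJ_shift.
  set l := y - Z.of_nat d. set r := y + Z.of_nat e.
  have hl : l <= u l.
    case: (Z.le_gt_cases l (u l)) => // hlt.
    exfalso; apply hd; have := hc l (l - 1) ltac:(lia). by rewrite /l; have -> : y - Z.of_nat d - 1 = y - 1 - Z.of_nat d by lia.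
  have hr : u r <= r.
    case: (Z.le_gt_cases (u r) r) => // hlt.
    exfalso; apply he; apply (hc r r); lia.
  have inl : forall k, l <= k < y -> inJ J k.
    move=> k hk; apply NNPP; have -> : k = y - 1 - Z.of_nat (Z.to_nat (y - 1 - k)) by lia.
    apply hdmin; rewrite /l in hk; lia.
  have inr : forall k, y <= k < r -> inJ J k.
    move=> k hk; apply NNPP; have -> : k = y + Z.of_nat (Z.to_nat (k - y)) by lia.
    apply hemin; rewrite /r in hk; lia.
  have c1 := @chain u l y (fun k hk => hinc k (inl k hk)) ltac:(rewrite /l; lia).
  have c2 := @chain u y r (fun k hk => hinc k (inr k hk)) ltac:(rewrite /r; lia).
  lia.
- have hall' : forall k, inJ J k by move=> k; apply NNPP => h; apply hall; exists k.
  case: hcase => [hs|[k hk]]; last by case: (hk (hall' k)).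
  have hi : forall x, u x < u (x + 1) by move=> x; apply hinc.
  have step : forall x, u (x + 1) = u x + 1.
    move=> x.
    have c := @chain u (x + 1) (x + Z.of_nat n) (fun k _ => hi k) ltac:(lia).
    have := hp x; have := hi x; lia.
  have hpos : forall m : nat, u (Z.of_nat m) = Z.of_nat m + u 0.
    elim=> [|m IH] //. rewrite Nat2Z.inj_succ -Z.add_1_r step IH; lia.
  have hneg : forall m : nat, u (- Z.of_nat m) = - Z.of_nat m + u 0.
    elim=> [|m IH] //. have := step (- Z.of_nat m.+1).
    have -> : - Z.of_nat m.+1 + 1 = - Z.of_nat m by lia. lia.
  have hall2 : forall x, u x = x + u 0.
    move=> x; case: (Z.le_gt_cases 0 x) => hx.
      have := hpos (Z.to_nat x); have -> : Z.of_nat (Z.to_nat x) = x by lia. done.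
    have := hneg (Z.to_nat (- x)); have -> : - Z.of_nat (Z.to_nat (- x)) = x by lia. done.
  have hs0 : zsum u n = zsum idz n + u 0 * Z.of_nat n.
    rewrite -zsum_addc; apply zsum_ext => y _; exact: hall2.
  case: hs => _ [_ hsum].
  rewrite hsum zsum_id in hs0.
  have u00 : u 0 = 0 by nia.
  apply functional_extensionality => x; rewrite hall2 u00 /idz; lia.
Qed.


Lemma descent n (J : {set 'I_n}) u : (2 <= n)%N -> Pre J u ->
  (Saff n u \/ exists k, ~ inJ J k) -> u <> idz ->
  exists x, inJ J x /\ u (x + 1) < u x.
Proof.
move=> hn hpre hc hne.
apply NNPP => hno; apply hne.
apply: (noDescent_id hn hpre hc) => x hx.
case: (Z.lt_ge_cases (u x) (u (x + 1))) => // h.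
case: (Z.eq_dec (u x) (u (x + 1))) => e.
  case: hpre => [hb _]. have := bij_inj hb e. lia.
exfalso; apply hno; exists x; split => //; lia.
Qed.

Lemma sgen_invol n (j : 'I_n) y : (2 <= n)%N -> sgen n j (sgen n j y) = y.
Proof.
move=> hn; rewrite (sgenE hn (ltn_ord j)); apply sg_invol.
  move/leP: hn; lia.
have := ltn_ord j; move/ltP; lia.
Qed.

Lemma gen_ind n (J : {set 'I_n}) (P : (Z -> Z) -> Prop) : (2 <= n)%N ->
  (forall u (j : 'I_n), P u -> j \in J -> P (zcomp u (sgen n j))) ->
  (forall u, P u -> Pre J u /\ (Saff n u \/ exists k, ~ inJ J k)) ->
  forall u, P u -> Wd J u.
Proof.
move=> hn hstab hpre.
have hN : 2 <= Z.of_nat n by move/leP: hn; lia.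
suff: forall m : nat, forall u, (Z.to_nat (Dpot n u) < m)%coq_nat -> P u -> Wd J u.
  move=> h u hu; apply: (h (Z.to_nat (Dpot n u)).+1) => //; lia.
elim=> [|m IH] u hm hu; first lia.
case: (classic (u = idz)) => [-> | hne]; first exact: Wd0.
have [[hb [hp hbp]] hc] := hpre u hu.
have [x [[j [hjJ hjx]] hdesc]] := descent hn (conj hb (conj hp hbp)) hc hne.
have hj : 0 <= Z.of_nat j < Z.of_nat n by have := ltn_ord j; move/ltP; lia.
have [hp1 hp2] := rep_spec hN hj.
set p := rep (Z.of_nat n) (Z.of_nat j) in hp1 hp2.
have [ex bx] := mod_dec x (ltac:(lia) : 0 < Z.of_nat n).
have [ep bp] := mod_dec p (ltac:(lia) : 0 < Z.of_nat n).
set t := x / Z.of_nat n - p / Z.of_nat n.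
have ex' : x = p + Z.of_nat n * t by rewrite /t; lia.
have dp : u (p + 1) < u p.
  have := periodic_mul hp t p; have := periodic_mul hp t (p + 1).
  have -> : p + 1 + Z.of_nat n * t = x + 1 by lia.
  rewrite -ex'; lia.
set u' := zcomp u (sgen n j).
have hD : Dpot n u' = Dpot n u - 2 * (u p - u (p + 1)).
  rewrite /u' (sgenE hn (ltn_ord j)). exact: Dpot_sg.
have hw : Wd J u'.
  apply IH; last exact: hstab.
  have := @Dpot_nonneg n u'; lia.
have -> : u = zcomp u' (sgen n j).
  apply functional_extensionality => y; rewrite /u' /zcomp sgen_invol //.
exact: WdS.
Qed.

Lemma Wd_comp n (J : {set 'I_n}) u v : Wd J u -> Wd J v -> Wd J (zcomp u v).
Proof.
move=> hu; elim=> [|v' j _ IH hj]; first exact: hu.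
exact: (WdS IH hj).
Qed.

Lemma Wd_gen n (J : {set 'I_n}) (j : 'I_n) : j \in J -> Wd J (sgen n j).
Proof. move=> hj; exact: (WdS (Wd0 J) hj). Qed.

Lemma Wd_inv n (J : {set 'I_n}) u : (2 <= n)%N -> Wd J u ->
  exists v, Wd J v /\ zcomp u v = idz /\ zcomp v u = idz.
Proof.
move=> hn; elim=> [|u' j hu' [v [hv [e1 e2]]] hj].
  by exists idz; split; [exact: Wd0 | split].
exists (zcomp (sgen n j) v); split; first exact: Wd_comp (Wd_gen hj) hv.
have e1' : forall y, u' (v y) = y by move=> y; have := congr1 (fun f => f y) e1.
have e2' : forall y, v (u' y) = y by move=> y; have := congr1 (fun f => f y) e2.
split; apply functional_extensionality => y; rewrite /zcomp /idz.
- by rewrite sgen_invol // e1'.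
- by rewrite e2' sgen_invol.
Qed.

Lemma Blk_Wd n (J : {set 'I_n}) u : (2 <= n)%N -> Blk J u -> Wd J u.
Proof.
move=> hn hu; apply: (@gen_ind n J (Blk J) hn _ _ u hu).
- move=> v j hv hj; exact: Blk_sg.
- move=> v [hs hc]; split; last by left. case: hs => hb [hp _]; by split.
Qed.

Lemma Pre_Wd n (J : {set 'I_n}) u : (2 <= n)%N -> (exists k, ~ inJ J k) -> Pre J u -> Wd J u.
Proof.
move=> hn hk hu; apply: (@gen_ind n J (Pre J) hn _ _ u hu).
- move=> v j hv hj; exact: Pre_sg.
- move=> v hv; split => //; by right.
Qed.

Lemma Blk_comp n (J : {set 'I_n}) u v : (2 <= n)%N -> Blk J u -> Blk J v -> Blk J (zcomp u v).
Proof.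
move=> hn hu hv; apply (Wd_Blk hn); apply: Wd_comp; [exact: Blk_Wd hn hu | exact: Blk_Wd hn hv].
Qed.

Lemma Blk_inv n (J : {set 'I_n}) u : (2 <= n)%N -> Blk J u ->
  exists v, Blk J v /\ zcomp u v = idz /\ zcomp v u = idz.
Proof.
move=> hn hu; have [v [hv e]] := Wd_inv hn (Blk_Wd hn hu).
exists v; split => //; exact: Wd_Blk.
Qed.

Lemma Blk_subgroup n (J : {set 'I_n}) : (2 <= n)%N -> subgroup n (Blk J).
Proof.
move=> hn; split; [|split; [|split]].
- by move=> u [].
- exact: Blk_idz.
- move=> u v; exact: Blk_comp.
- move=> u; exact: Blk_inv.
Qed.

Lemma gens_Blk n (J : {set 'I_n}) u : (2 <= n)%N -> (gens n J u <-> Blk J u).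
Proof.
move=> hn; split.
- move=> h; apply: h; first exact: Blk_subgroup.
  move=> s [j [hj ->]]; apply: Wd_Blk hn _; exact: Wd_gen.
- move=> hb H [hsub [h1 [hc hi]]] hS.
  elim: (Blk_Wd hn hb) => [|v j _ IH hj] //.
  apply: hc IH _; apply hS; by exists j.
Qed.

Lemma Wd_sub n (J : {set 'I_n}) (H : (Z -> Z) -> Prop) u : subgroup n H ->
  (forall j : 'I_n, j \in J -> H (sgen n j)) -> Wd J u -> H u.
Proof.
move=> [hsub [h1 [hc hi]]] hS; elim=> [|v j _ IH hj] //.
apply: hc IH _; exact: hS.
Qed.


Lemma ord_eqZ n (j l : 'I_n) : Z.of_nat j = Z.of_nat l -> j = l.
Proof. move=> h; apply: val_inj => /=; lia. Qed.

Lemma inJ_setT n k : (0 < n)%N -> inJ [set: 'I_n] k.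
Proof. move=> hn; have [j hj] := ord_of hn k; exists j; split => //; exact: in_setT. Qed.

Lemma Saff_Blk n u : (0 < n)%N -> (Saff n u <-> Blk [set: 'I_n] u).
Proof.
move=> hn; split; last by case.
move=> h; split => // x k _; exact: inJ_setT.
Qed.

Lemma Saff_comp n u v : (2 <= n)%N -> Saff n u -> Saff n v -> Saff n (zcomp u v).
Proof.
move=> hn hu hv; have hn0 : (0 < n)%N by apply: leq_trans hn.
apply/(Saff_Blk _ hn0); apply: Blk_comp => //; exact/Saff_Blk.
Qed.

Lemma bpres_mono n (J L : {set 'I_n}) u : J \subset L -> bpres J u -> bpres L u.
Proof. move=> s h x; exact: cutfree_mono s (h x). Qed.

Lemma Blk_mono n (J L : {set 'I_n}) u : J \subset L -> Blk J u -> Blk L u.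
Proof. move=> s [h1 h2]; split => //; exact: bpres_mono s h2. Qed.

Lemma inJ_I n (J L : {set 'I_n}) k : inJ J k -> inJ L k -> inJ (J :&: L) k.
Proof.
move=> [j [hj e]] [l [hl e']].
have ejl : j = l by apply: ord_eqZ; lia.
exists j; split => //; rewrite inE hj /= ejl //.
Qed.

Lemma part3 n (J L : {set 'I_n}) : (2 <= n)%N ->
  set_eq (fun u => gens n J u /\ gens n L u) (gens n (J :&: L)).
Proof.
move=> hn u /=; rewrite !gens_Blk //; split.
- move=> [[hs h1] [_ h2]]; split => // x k hk; apply: inJ_I; [exact: (h1 x k hk) | exact: (h2 x k hk)].
- move=> h; split; [apply: (Blk_mono _ h); exact: subsetIl | apply: (Blk_mono _ h); exact: subsetIr].
Qed.

Lemma Kpt_Blk n (i : 'I_n) u : (2 <= n)%N -> (Kpt n i u <-> Blk [set~ i] u).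
Proof. move=> hn; exact: gens_Blk. Qed.

Lemma KtauE n (tau : {set 'I_n}) u : (2 <= n)%N ->
  (Ktau n (Kpt n) tau u <-> Blk (~: tau) u).
Proof.
move=> hn; have hn0 : (0 < n)%N by apply: leq_trans hn.
rewrite /Ktau; case: eqP => [-> | hne].
  rewrite setC0; exact: Saff_Blk.
split.
- move=> h.
  have [i0 hi0] : exists i, i \in tau by apply/set0Pn/eqP.
  have [hs _] := (Kpt_Blk i0 u hn).1 (h i0 hi0).
  split => // x k hk.
  have [j hj] := ord_of hn0 k.
  exists j; split => //; rewrite inE; apply/negP => hjt.
  have [_ hb] := (Kpt_Blk j u hn).1 (h j hjt).
  have [l [hl el]] := hb x k hk.
  move: hl; rewrite !inE => /eqP; apply; apply: ord_eqZ; lia.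
- move=> h i hi; apply/(Kpt_Blk i u hn); apply: (Blk_mono _ h).
  apply/subsetP => x; rewrite !inE; apply: contraNneq => -> //.
Qed.

Lemma A1 n (tau tau' : {set 'I_n}) : (2 <= n)%N ->
  set_eq (Ktau n (Kpt n) (tau :&: tau'))
         (gen n (fun u => Ktau n (Kpt n) tau u \/ Ktau n (Kpt n) tau' u)).
Proof.
move=> hn u; rewrite KtauE // setCI; split.
- move=> hu H hH hS.
  apply: Wd_sub hH _ (Blk_Wd hn hu) => j; rewrite inE => /orP [hj|hj]; apply: hS.
  + left; apply/KtauE => //; apply: Wd_Blk hn _; exact: Wd_gen.
  + right; apply/KtauE => //; apply: Wd_Blk hn _; exact: Wd_gen.
- move=> h; apply: h; first exact: Blk_subgroup.
  move=> s [hs|hs]; move/(KtauE _ _ hn): hs => hs; apply: (Blk_mono _ hs).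
  + exact: subsetUl.
  + exact: subsetUr.
Qed.

Lemma A3 n (J : {set 'I_n}) (i : 'I_n) : (2 <= n)%N -> i \in J ->
  ~ set_eq (Ktau n (Kpt n) J) (Ktau n (Kpt n) (J :\ i)).
Proof.
move=> hn hi heq.
have h1 : Ktau n (Kpt n) (J :\ i) (sgen n i).
  apply/KtauE => //; apply: Wd_Blk hn _; apply: Wd_gen.
  by rewrite !inE eqxx.
move/heq/(KtauE _ _ hn): h1 => [_ hb].
have hN : 2 <= Z.of_nat n by move/leP: hn; lia.
have hi' : 0 <= Z.of_nat i < Z.of_nat n by have := ltn_ord i; move/ltP; lia.
have hs : sgen n i (Z.of_nat i) = Z.of_nat i + 1.
  rewrite (sgenE hn (ltn_ord i)).
  case: (sg_cases (Z.of_nat n) (Z.of_nat i) (Z.of_nat i)) => [[h ->]|[[h [h' ->]]|[h [h' ->]]]] //;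
  rewrite Z.mod_small in h; lia.
have := hb (Z.of_nat i) (Z.of_nat i); rewrite hs => /(_ ltac:(lia)) [j [hj e]].
rewrite Z.mod_small in e; last lia.
move: hj; rewrite inE (ord_eqZ e) hi //.
Qed.


Lemma Dpot_dec n u (j : 'I_n) x : (2 <= n)%N -> periodic n u ->
  Z.of_nat j = x mod Z.of_nat n -> u (x + 1) < u x ->
  Dpot n (zcomp u (sgen n j)) < Dpot n u.
Proof.
move=> hn hp hjx hdesc.
have hN : 2 <= Z.of_nat n by move/leP: hn; lia.
have hj : 0 <= Z.of_nat j < Z.of_nat n by have := ltn_ord j; move/ltP; lia.
have [hp1 hp2] := rep_spec hN hj.
set p := rep (Z.of_nat n) (Z.of_nat j) in hp1 hp2.
have [ex bx] := mod_dec x (ltac:(lia) : 0 < Z.of_nat n).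
have [ep bp] := mod_dec p (ltac:(lia) : 0 < Z.of_nat n).
set t := x / Z.of_nat n - p / Z.of_nat n.
have ex' : x = p + Z.of_nat n * t by rewrite /t; lia.
have dp : u (p + 1) < u p.
  have := periodic_mul hp t p; have := periodic_mul hp t (p + 1).
  have -> : p + 1 + Z.of_nat n * t = x + 1 by lia.
  rewrite -ex'; lia.
rewrite (sgenE hn (ltn_ord j)) (Dpot_sg hn hj hp) -/p; lia.
Qed.

Definition Sorted n (i : 'I_n) (v : Z -> Z) := forall x, inJ [set~ i] x -> v x < v (x + 1).

Lemma sorted_lt n (i : 'I_n) v y z : Sorted i v -> y < z -> cutfree [set~ i] y z -> v y < v z.
Proof.
move=> hs hyz hc.
have := @chain v y z (fun k hk => hs k (hc k ltac:(lia))) ltac:(lia). lia.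
Qed.

Lemma Blk_Saff n (J : {set 'I_n}) u : Blk J u -> Saff n u.
Proof. by case. Qed.

Lemma Blk_inj n (J : {set 'I_n}) u : Blk J u -> injective u.
Proof. by move=> [[hb _] _]; apply: bij_inj. Qed.

Lemma Blk_per n (J : {set 'I_n}) u : Blk J u -> periodic n u.
Proof. by move=> [[_ [hp _]] _]. Qed.

Lemma LemS n (i j : 'I_n) a : (2 <= n)%N -> Blk [set~ j] a ->
  exists c, Blk [set~ i] c /\ Blk [set~ j] (zcomp a c) /\ Sorted i (zcomp a c).
Proof.
move=> hn.
suff: forall m : nat, forall a, (Z.to_nat (Dpot n a) < m)%coq_nat -> Blk [set~ j] a ->
  exists c, Blk [set~ i] c /\ Blk [set~ j] (zcomp a c) /\ Sorted i (zcomp a c).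
  move=> h ha; apply: (h (Z.to_nat (Dpot n a)).+1) => //; lia.
elim=> [|m IH] {}a hm ha; first lia.
case: (classic (Sorted i a)) => hsa.
  exists idz; split; [exact: Blk_idz | split => //].
have [x hx] : exists x, inJ [set~ i] x /\ a (x + 1) < a x.
  apply: NNPP => hno; apply: hsa => x hx.
  case: (Z.lt_ge_cases (a x) (a (x + 1))) => // h.
  case: (Z.eq_dec (a x) (a (x + 1))) => e.
    have := Blk_inj ha e; lia.
  exfalso; apply: hno; exists x; split => //; lia.
case: hx => [[ji [hji eji]] hdesc].
have hjx : inJ [set~ j] x.
  apply: NNPP => hno.
  have h1 : a x <= x.
    case: (Z.le_gt_cases (a x) x) => // h.
    exfalso; apply: hno; apply: (ha.2 x x); lia.
  have h2 : x + 1 <= a (x + 1).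
    case: (Z.le_gt_cases (x + 1) (a (x + 1))) => // h.
    exfalso; apply: hno; apply: (ha.2 (x + 1) x); lia.
  lia.
case: hjx => [jj [hjj ejj]].
have ejj' : jj = ji by apply: ord_eqZ; lia.
subst jj.
set a' := zcomp a (sgen n ji).
have ha' : Blk [set~ j] a' by exact: Blk_sg.
have hD := Dpot_dec hn (Blk_per ha) eji hdesc.
have [c' [hc' [hac' hs']]] := IH a' ltac:(have := @Dpot_nonneg n a'; rewrite -/a' in hD; lia) ha'.
exists (zcomp (sgen n ji) c'); split; last by split.
apply: Blk_comp => //; apply: Wd_Blk hn _; exact: Wd_gen.
Qed.

Lemma LemU n (i : 'I_n) v c : (2 <= n)%N -> Sorted i v -> Blk [set~ i] c ->
  Sorted i (zcomp v c) -> c = idz.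
Proof.
move=> hn hv hc hvc.
apply: NNPP => hne.
have hpre : Pre [set~ i] c by case: hc => [[hb [hp _]] hbp]; split => //.
have [x [hx hd]] := descent hn hpre (or_introl (Blk_Saff hc)) hne.
have hcf : cutfree [set~ i] (c (x + 1)) (c x).
  apply: cutfree_trans; first apply: cutfree_sym; first exact: (hc.2 (x + 1)).
  apply: cutfree_trans; last exact: (hc.2 x).
  move=> k hk; have -> : k = x by lia. exact: hx.
have := sorted_lt hv hd hcf.
have := hvc x hx. rewrite /zcomp. lia.
Qed.

Lemma A2 n (tau : {set 'I_n}) (i : 'I_n) : (2 <= n)%N ->
  set_eq (prodset (Ktau n (Kpt n) tau) (Kpt n i))
         (fun u => Saff n u /\ forall j, j \in tau -> prodset (Kpt n j) (Kpt n i) u).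
Proof.
move=> hn u; split.
- move=> [a [b [ha [hb ->]]]].
  move/(KtauE _ _ hn): ha => ha; move/(Kpt_Blk _ _ hn): hb => hb.
  split; first exact: Saff_comp (Blk_Saff ha) (Blk_Saff hb).
  move=> j hj; exists a, b; split; last split => //.
    apply/(Kpt_Blk _ _ hn); apply: (Blk_mono _ ha).
    apply/subsetP => x; rewrite !inE; apply: contraNneq => -> //.
  exact/(Kpt_Blk _ _ hn).
- move=> [hs h].
  case: (eqVneq tau set0) => [e | hne].
    exists u, idz; split; last split => //.
      rewrite /Ktau e eqxx //.
    apply/(Kpt_Blk _ _ hn); exact: Blk_idz.
  have [j0 hj0] : exists j, j \in tau by apply/set0Pn.
  have [a0 [b0 [ha0 [hb0 e0]]]] := h j0 hj0.
  move/(Kpt_Blk _ _ hn): ha0 => ha0; move/(Kpt_Blk _ _ hn): hb0 => hb0.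
  have [c0 [hc0 [hv0 hs0]]] := LemS i hn ha0.
  have [c0' [hc0' [ec0 ec0']]] := Blk_inv hn hc0.
  have ec0p : forall y, c0 (c0' y) = y by move=> y; have := congr1 (fun f => f y) ec0.
  set v0 := zcomp a0 c0.
  have hall : forall j, j \in tau -> Blk [set~ j] v0.
    move=> j hj.
    have [a [b [ha [hb e]]]] := h j hj.
    move/(Kpt_Blk _ _ hn): ha => ha; move/(Kpt_Blk _ _ hn): hb => hb.
    have [c [hc [hv hsv]]] := LemS i hn ha.
    have [b' [hb' [eb eb']]] := Blk_inv hn hb.
    have ebp : forall y, b (b' y) = y by move=> y; have := congr1 (fun f => f y) eb.
    set d := zcomp c0' (zcomp b0 (zcomp b' c)).
    have hd : Blk [set~ i] d.
      apply: Blk_comp => //; apply: Blk_comp => //; apply: Blk_comp => //.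
    have evd : zcomp v0 d = zcomp a c.
      apply functional_extensionality => y; rewrite /v0 /d /zcomp ec0p.
      have := congr1 (fun f => f (b' (c y))) e0; have := congr1 (fun f => f (b' (c y))) e.
      rewrite /zcomp ebp => -> ->. done.
    have d1 : d = idz by apply: (LemU hn hs0 hd); rewrite evd.
    rewrite d1 in evd.
    have -> : v0 = zcomp a c by rewrite -evd.
    exact: hv.
  exists v0, (zcomp c0' b0); split; [|split].
  + rewrite /Ktau (negbTE hne) => j hj.
    apply/(Kpt_Blk _ _ hn); exact: hall.
  + apply/(Kpt_Blk _ _ hn); exact: Blk_comp.
  + rewrite e0; apply functional_extensionality => y; rewrite /v0 /zcomp ec0p //.
Qed.


Definition ordZ n (i0 : 'I_n) (x : Z) : 'I_n := insubd i0 (Z.to_nat (x mod Z.of_nat n)).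

Lemma ordZ_val n (i0 : 'I_n) x : Z.of_nat (ordZ i0 x) = x mod Z.of_nat n.
Proof.
have hn : (0 < Z.of_nat n) by have := ltn_ord i0; move/ltP; lia.
have hb := @mod_bound (Z.of_nat n) x hn.
rewrite /ordZ val_insubd.
have -> : (Z.to_nat (x mod Z.of_nat n) < n)%N by apply/ltP; lia.
lia.
Qed.

Lemma ordZ_eq n (i0 : 'I_n) x y : x mod Z.of_nat n = y mod Z.of_nat n -> ordZ i0 x = ordZ i0 y.
Proof. move=> h; apply: ord_eqZ; rewrite !ordZ_val //. Qed.

Lemma ordZ_nat n (i0 : 'I_n) (r : 'I_n) : ordZ i0 (Z.of_nat r) = r.
Proof.
apply: ord_eqZ; rewrite ordZ_val Z.mod_small //.
have := ltn_ord r; move/ltP; lia.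
Qed.

Definition fu n (i0 : 'I_n) (u : Z -> Z) : 'I_n -> 'I_n := fun r => ordZ i0 (u (Z.of_nat r)).

Definition phi n (i0 : 'I_n) (u : Z -> Z) : {perm 'I_n} :=
  match injectiveP (fu i0 u) with
  | ReflectT H => perm H
  | ReflectF _ => 1%g
  end.

Lemma phiE n (i0 : 'I_n) u : injective (fu i0 u) -> forall r, phi i0 u r = ordZ i0 (u (Z.of_nat r)).
Proof.
move=> hi r; rewrite /phi; case: injectiveP => h; first by rewrite permE.
by case: (h hi).
Qed.

Lemma per_mod n u x y : (0 < n)%N -> periodic n u -> x mod Z.of_nat n = y mod Z.of_nat n ->
  (u x) mod Z.of_nat n = (u y) mod Z.of_nat n.
Proof.
move=> /ltP hn hp e.
have hN : 0 < Z.of_nat n by lia.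
have [ex _] := mod_dec x hN; have [ey _] := mod_dec y hN.
have -> : x = y + Z.of_nat n * (x / Z.of_nat n - y / Z.of_nat n) by lia.
rewrite (periodic_mul hp) mod_addN //.
Qed.

Lemma fu_inj n (i0 : 'I_n) u : Saff n u -> injective (fu i0 u).
Proof.
move=> [hb [hp _]] r r'; rewrite /fu => e.
have hN : 0 < Z.of_nat n by have := ltn_ord i0; move/ltP; lia.
have := congr1 (fun o : 'I_n => Z.of_nat o) e; rewrite /= !ordZ_val => e'.
have [e1 _] := mod_dec (u (Z.of_nat r)) hN; have [e2 _] := mod_dec (u (Z.of_nat r')) hN.
set t := u (Z.of_nat r') / Z.of_nat n - u (Z.of_nat r) / Z.of_nat n.
have : u (Z.of_nat r') = u (Z.of_nat r + Z.of_nat n * t) by rewrite (periodic_mul hp) /t; lia.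
move/(bij_inj hb) => e3.
have hr := ltn_ord r; have hr' := ltn_ord r'; move/ltP: hr => hr; move/ltP: hr' => hr'.
have t0 : t = 0 by nia.
apply: ord_eqZ; lia.
Qed.

Lemma blockeq n (i : 'I_n) y z : cutfree [set~ i] y z ->
  y mod Z.of_nat n = z mod Z.of_nat n -> y = z.
Proof.
move=> hc e.
have hN : 0 < Z.of_nat n by have := ltn_ord i; move/ltP; lia.
have hi : 0 <= Z.of_nat i < Z.of_nat n by have := ltn_ord i; move/ltP; lia.
apply: NNPP => hne.
wlog hyz : y z hc e hne / y < z.
  move=> hw; case: (Z.lt_ge_cases y z) => h; first by apply (hw y z).
  have hzy : z < y by lia. exact: (hw z y (cutfree_sym hc) (esym e) (fun h' => hne (esym h')) hzy).
have [ey by'] := mod_dec y hN; have [ez bz] := mod_dec z hN.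
have hd : z - y = Z.of_nat n * (z / Z.of_nat n - y / Z.of_nat n) by lia.
have hq : 1 <= z / Z.of_nat n - y / Z.of_nat n by nia.
have hyzN : y + Z.of_nat n <= z by nia.
have hk := @mod_bound (Z.of_nat n) (Z.of_nat i - y) hN.
set k := y + (Z.of_nat i - y) mod Z.of_nat n.
have [l [hl el]] := hc k ltac:(rewrite /k; lia).
have hkm : k mod Z.of_nat n = Z.of_nat i.
  have [e1 _] := mod_dec (Z.of_nat i - y) hN.
  have -> : k = Z.of_nat i + Z.of_nat n * (- ((Z.of_nat i - y) / Z.of_nat n)) by rewrite /k; lia.
  rewrite mod_addN // Z.mod_small //.
move: hl; rewrite !inE (ord_eqZ (_ : Z.of_nat l = Z.of_nat i)) ?eqxx //; lia.
Qed.

Definition bl n (i : 'I_n) x := Z.of_nat i + 1 + Z.of_nat n * ((x - Z.of_nat i - 1) / Z.of_nat n).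

Lemma bl_spec n (i : 'I_n) x : bl i x <= x < bl i x + Z.of_nat n.
Proof.
have hN : 0 < Z.of_nat n by have := ltn_ord i; move/ltP; lia.
have [e b] := mod_dec (x - Z.of_nat i - 1) hN. rewrite /bl; lia.
Qed.

Lemma bl_char n (i : 'I_n) x q : Z.of_nat i + 1 + Z.of_nat n * q <= x < Z.of_nat i + 1 + Z.of_nat n * q + Z.of_nat n ->
  bl i x = Z.of_nat i + 1 + Z.of_nat n * q.
Proof.
move=> h.
have hN : 0 < Z.of_nat n by have := ltn_ord i; move/ltP; lia.
rewrite /bl; congr (_ + _ * _).
symmetry; apply: (Z.div_unique _ _ _ (x - Z.of_nat i - 1 - Z.of_nat n * q)); lia.
Qed.

Lemma bl_addN n (i : 'I_n) x : bl i (x + Z.of_nat n) = bl i x + Z.of_nat n.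
Proof.
have hN : 0 < Z.of_nat n by have := ltn_ord i; move/ltP; lia.
rewrite /bl.
have -> : x + Z.of_nat n - Z.of_nat i - 1 = (x - Z.of_nat i - 1) + 1 * Z.of_nat n by lia.
rewrite Z.div_add; lia.
Qed.

Lemma bl_same n (i : 'I_n) x y : bl i x <= y < bl i x + Z.of_nat n -> bl i y = bl i x.
Proof. move=> h; rewrite [in RHS]/bl; apply: bl_char; rewrite /bl in h; lia. Qed.

Lemma cutfree_bl n (i : 'I_n) x y : bl i x <= y < bl i x + Z.of_nat n -> cutfree [set~ i] x y.
Proof.
move=> hy.
have hN : 0 < Z.of_nat n by have := ltn_ord i; move/ltP; lia.
have hi : 0 <= Z.of_nat i < Z.of_nat n by have := ltn_ord i; move/ltP; lia.
have hx := bl_spec i x.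
move=> k hk.
exists (ordZ i k); split; last by rewrite ordZ_val.
rewrite !inE; apply/eqP => e.
have := ordZ_val i k; rewrite e => ek.
set q := (x - Z.of_nat i - 1) / Z.of_nat n.
have hb : bl i x = Z.of_nat i + 1 + Z.of_nat n * q by [].
set s := k - bl i x.
have hs : 0 <= s <= Z.of_nat n - 2 by rewrite /s; lia.
have : k = (Z.of_nat i + 1 + s) + Z.of_nat n * q by rewrite /s; lia.
move=> ek'; rewrite ek' mod_addN // in ek.
case: (Z.lt_ge_cases (Z.of_nat i + 1 + s) (Z.of_nat n)) => h.
  rewrite Z.mod_small in ek; lia.
have : (Z.of_nat i + 1 + s) mod Z.of_nat n = Z.of_nat i + 1 + s - Z.of_nat n.
  have -> : Z.of_nat i + 1 + s = (Z.of_nat i + 1 + s - Z.of_nat n) + Z.of_nat n * 1 by lia.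
  rewrite modr; lia.
lia.
Qed.

Definition Ap n (i : 'I_n) (p : {perm 'I_n}) x :=
  bl i x + ((Z.of_nat (p (ordZ i x)) - bl i x) mod Z.of_nat n).

Lemma Ap_spec n (i : 'I_n) (p : {perm 'I_n}) x :
  bl i x <= Ap i p x < bl i x + Z.of_nat n /\ (Ap i p x) mod Z.of_nat n = Z.of_nat (p (ordZ i x)).
Proof.
have hN : 0 < Z.of_nat n by have := ltn_ord i; move/ltP; lia.
have hb := @mod_bound (Z.of_nat n) (Z.of_nat (p (ordZ i x)) - bl i x) hN.
split; first by rewrite /Ap; lia.
have hp : (Z.of_nat (p (ordZ i x)) < Z.of_nat n) by have := ltn_ord (p (ordZ i x)); move/ltP; lia.
have [e _] := mod_dec (Z.of_nat (p (ordZ i x)) - bl i x) hN.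
rewrite /Ap.
have -> : bl i x + (Z.of_nat (p (ordZ i x)) - bl i x) mod Z.of_nat n =
  Z.of_nat (p (ordZ i x)) + Z.of_nat n * (- ((Z.of_nat (p (ordZ i x)) - bl i x) / Z.of_nat n)) by lia.
rewrite mod_addN // Z.mod_small //; lia.
Qed.

Lemma Ap_char n (i : 'I_n) (p : {perm 'I_n}) x y : bl i y = bl i x -> y mod Z.of_nat n = Z.of_nat (p (ordZ i x)) ->
  Ap i p x = y.
Proof.
move=> hb hy.
have hN : 0 < Z.of_nat n by have := ltn_ord i; move/ltP; lia.
have hys := bl_spec i y.
rewrite /Ap -hy.
have -> : y mod Z.of_nat n - bl i x = (y - bl i x) + Z.of_nat n * (- (y / Z.of_nat n)).
  have [e _] := mod_dec y hN; lia.
rewrite mod_addN // Z.mod_small; lia.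
Qed.

Lemma ordZ_Ap n (i : 'I_n) (p : {perm 'I_n}) x : ordZ i (Ap i p x) = p (ordZ i x).
Proof. apply: ord_eqZ; rewrite ordZ_val; exact: (Ap_spec i p x).2. Qed.

Lemma Ap_cancel n (i : 'I_n) (p p' : {perm 'I_n}) : cancel p' p -> cancel (Ap i p') (Ap i p).
Proof.
move=> hc x; apply: Ap_char.
- symmetry; apply: bl_same; exact: (Ap_spec i p' x).1.
- rewrite ordZ_Ap hc ordZ_val //.
Qed.

Lemma Ap_Pre n (i : 'I_n) (p : {perm 'I_n}) : Pre [set~ i] (Ap i p).
Proof.
have hN : 0 < Z.of_nat n by have := ltn_ord i; move/ltP; lia.
split; [|split].
- exists (Ap i p^-1); apply: Ap_cancel; [exact: permK | exact: permKV].
- move=> x; apply: Ap_char.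
  + rewrite !bl_addN; congr (_ + _); apply: bl_same; exact: (Ap_spec i p x).1.
  + rewrite mod_addN1 // (Ap_spec i p x).2; congr (Z.of_nat (p _)).
    apply: ordZ_eq; rewrite mod_addN1 //.
- move=> x; apply: cutfree_bl; exact: (Ap_spec i p x).1.
Qed.

Lemma part2 n (i : 'I_n) : (2 <= n)%N ->
     exists phi : (Z -> Z) -> {perm 'I_n},
       (forall a b, Kpt n i a -> Kpt n i b ->
          forall x, phi (zcomp a b) x = phi a (phi b x)) /\
       (forall a b, Kpt n i a -> Kpt n i b -> phi a = phi b -> a = b) /\
       (forall p : {perm 'I_n}, exists a, Kpt n i a /\ phi a = p) /\
       (forall j : 'I_n, j != i -> phi (sgen n j) = tperm j (ordS j)).
Proof.
move=> hn.
have hn0 : (0 < n)%N by apply: leq_trans hn.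
have hN : 2 <= Z.of_nat n by move/leP: hn; lia.
have phiS : forall u, Saff n u -> forall r, phi i u r = ordZ i (u (Z.of_nat r)).
  move=> u hu; apply: phiE; exact: fu_inj.
exists (phi i); split; [|split; [|split]].
- move=> a b /(Kpt_Blk _ _ hn) ha /(Kpt_Blk _ _ hn) hb x.
  have sa := Blk_Saff ha; have sb := Blk_Saff hb; have sab := Blk_Saff (Blk_comp hn ha hb).
  rewrite !phiS //.
  rewrite /zcomp; apply: ordZ_eq; apply: per_mod => //; first exact: Blk_per ha.
  rewrite ordZ_val Zmod_mod //.
- move=> a b /(Kpt_Blk _ _ hn) ha /(Kpt_Blk _ _ hn) hb e.
  apply functional_extensionality => x.
  apply: (@blockeq n i); first exact: cutfree_trans (cutfree_sym (ha.2 x)) (hb.2 x).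
  have := congr1 (fun s : {perm 'I_n} => Z.of_nat (s (ordZ i x))) e.
  rewrite /= !phiS; [|exact: Blk_Saff hb|exact: Blk_Saff ha].
  rewrite !ordZ_val => e'.
  rewrite (@per_mod n a x (Z.of_nat (ordZ i x))) ?ordZ_val ?Zmod_mod //; last exact: Blk_per ha.
  rewrite (@per_mod n b x (Z.of_nat (ordZ i x))) ?ordZ_val ?Zmod_mod //; exact: Blk_per hb.
- move=> p; exists (Ap i p).
  have hb : Blk [set~ i] (Ap i p).
    apply (Wd_Blk hn); apply: (Pre_Wd hn _ (Ap_Pre i p)).
    exists (Z.of_nat i) => [[l [hl el]]].
    rewrite Z.mod_small in el; last by have := ltn_ord i; move/ltP; lia.
    move: hl; rewrite !inE (ord_eqZ el) eqxx //.
  split; first exact/(Kpt_Blk _ _ hn).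
  apply/permP => r; rewrite phiS; last exact: Blk_Saff hb.
  by rewrite ordZ_Ap ordZ_nat.
- move=> j _.
  apply/permP => r; rewrite phiS; last first.
    apply: Blk_Saff; apply (Wd_Blk hn); apply: (@Wd_gen n [set: 'I_n]); exact: in_setT.
  have hj : 0 <= Z.of_nat j < Z.of_nat n by have := ltn_ord j; move/ltP; lia.
  have hr : 0 <= Z.of_nat r < Z.of_nat n by have := ltn_ord r; move/ltP; lia.
  have hS : Z.of_nat (ordS j) = (Z.of_nat j + 1) mod Z.of_nat n.
    rewrite /ordS /=.
    case: (jp_cases hj) => [[e1 e2]|[e2 e1]]; rewrite e1.
      rewrite modn_small; [lia | apply/ltP; lia].
    have -> : j.+1 = n by lia.
    rewrite modnn; lia.
  rewrite (sgenE hn (ltn_ord j)).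
  case: (sg_cases (Z.of_nat n) (Z.of_nat j) (Z.of_nat r)) => [[h1 ->]|[[h1 [h2 ->]]|[h1 [h2 ->]]]];
    rewrite Z.mod_small in h1 => //.
  + have -> : r = j by apply: ord_eqZ.
    rewrite tpermL; apply: ord_eqZ; rewrite ordZ_val hS; lia.
  + rewrite Z.mod_small in h2 => //.
    have er : r = ordS j by apply: ord_eqZ; lia.
    rewrite [X in tperm _ _ X]er tpermR; apply: ord_eqZ; rewrite ordZ_val.
    have rm : Z.of_nat r mod Z.of_nat n = Z.of_nat r by rewrite Z.mod_small.
    case: (mod_sub1 (Z.of_nat r) (ltac:(lia) : 0 < Z.of_nat n)); case: (jp_cases hj); lia.
  + rewrite Z.mod_small in h2 => //.
    rewrite tpermD.
    * exact: ordZ_nat.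
    * apply/eqP => e; apply: h1; rewrite e //.
    * apply/eqP => e; apply: h2; rewrite -e hS //.
Qed.

Close Scope Z_scope.

Theorem mainTheorem4 (n : nat) (hn : 2 <= n) :
  (* (1) *)
  (forall J : {set 'I_n}, 1 < #|J| ->
     subgroup_geometry_system n (Kpt n) J) /\
  (* (2) K_{i} is isomorphic to Sym(Z/nZ) via s~_j |-> (j  j+1 mod n) *)
  (forall i : 'I_n,
     exists phi : (Z -> Z) -> {perm 'I_n},
       (forall a b, Kpt n i a -> Kpt n i b ->
          forall x, phi (zcomp a b) x = phi a (phi b x)) /\
       (forall a b, Kpt n i a -> Kpt n i b -> phi a = phi b -> a = b) /\
       (forall p : {perm 'I_n}, exists a, Kpt n i a /\ phi a = p) /\
       (forall j : 'I_n, j != i -> phi (sgen n j) = tperm j (ordS j))) /\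
  (* (3) *)
  (forall J L : {set 'I_n},
     set_eq (fun u => gens n J u /\ gens n L u) (gens n (J :&: L))).
Proof.
split; [|split].
- move=> J hJ; split; [|split].
  + move=> tau tau' _ _; exact: A1.
  + move=> tau i _ _ _; exact: A2.
  + move=> i hi; exact: A3.
- move=> i; exact: part2.
- move=> J L; exact: part3.
Qed.
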